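(* For every integer $m\geq 1$ and every real $x>0$, $$\frac{x}{2m^2(1+\sqrt{x})^3}(1+\sqrt{x})^{2m}\leq \beta_m(x)\leq (1+\sqrt{x})^{2m},$$ where $\beta_m(x)=\sum_{\ell=1}^m N(m,\ell)x^\ell$ and $N(m,\ell)=\frac{1}{m}\binom{m}{\ell-1}\binom{m}{\ell}$. *)

(* Defs.v *)
From mathcomp Require Import all_boot all_order all_algebra.
From mathcomp Require Import reals.
Set Implicit Arguments. Unset Strict Implicit. Unset Printing Implicit Defensive.
Import Order.TTheory GRing.Theory Num.Theory.
Local Open Scope ring_scope.

Definition narayana (R : realType) (m l : nat) : R :=
  (m%:R)^-1 * ('C(m, l.-1))%:R * ('C(m, l))%:R.

Definition beta (R : realType) (m : nat) (x : R) : R :=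
  \sum_(1 <= l < m.+1) narayana R m l * x ^+ l.

(* Main.v *)
Require Import Defs.
From mathcomp Require Import all_boot all_order all_algebra.
From mathcomp Require Import zify ring lra reals.
Import Order.TTheory GRing.Theory Num.Theory.
Set Implicit Arguments. Unset Strict Implicit. Unset Printing Implicit Defensive.

Lemma logc m i j : i < j -> 'C(m, i) * 'C(m, j.+1) <= 'C(m, i.+1) * 'C(m, j).
Proof.
move=> hij.
have [hjm|hjm] := leqP j.+1 m; last by rewrite (@bin_small m j.+1) // muln0.
have H1 := mul_bin_left m i.
have H2 := mul_bin_left m j.
rewrite -(@leq_pmul2r (i.+1 * j.+1)) //.
have -> : 'C(m, i) * 'C(m, j.+1) * (i.+1 * j.+1) = ('C(m,i) * 'C(m,j)) * ((m - j) * i.+1).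
  by transitivity ('C(m,i) * i.+1 * (j.+1 * 'C(m,j.+1))); [ring| rewrite H2; ring].
have -> : 'C(m, i.+1) * 'C(m, j) * (i.+1 * j.+1) = ('C(m,i) * 'C(m,j)) * ((m - i) * j.+1).
  by transitivity ((i.+1 * 'C(m,i.+1)) * 'C(m,j) * j.+1); [ring| rewrite H1; ring].
apply: leq_mul => //. nia.
Qed.

Lemma mid m k : 1 <= m -> k <= m -> 'C(m, k) <= (if k is t.+1 then 'C(m, t) else 0) + 'C(m, k.+1).
Proof.
move=> hm; case: k => [|t] hk.
  by rewrite bin0 bin1.
set c := 'C(m, t.+1).
have H1 := mul_bin_left m t.
have H2 := mul_bin_left m t.+1.
rewrite -(@leq_pmul2r ((m - t) * t.+2)); last by nia.
apply: (@leq_trans (c * ((t.+1) * t.+2 + (m - t.+1) * (m - t)))).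
  rewrite leq_mul2l; apply/orP; right; nia.
have -> : c * (t.+1 * t.+2 + (m - t.+1) * (m - t)) = ((t.+1 * c) * t.+2 + (t.+2 * 'C(m, t.+2)) * (m - t)).
  by transitivity (c * t.+1 * t.+2 + (t.+2 * 'C(m, t.+2)) * (m - t)); [rewrite H2; ring|ring].
apply: eq_leq. transitivity ((t.+1 * c) * t.+2 + (t.+2 * 'C(m, t.+2)) * (m - t)); [ring|rewrite H1; ring].
Qed.

Lemma nar m l : 1 <= l <= m -> 'C(m, l.-1) <= m * 'C(m, l).
Proof.
case: l => [|l] // /andP[_ hl] /=.
have H := mul_bin_left m l.
apply: (@leq_trans ((m - l) * 'C(m, l))).
  rewrite leq_pmull //; lia.
rewrite -H leq_mul2r; apply/orP; right; lia.
Qed.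
From mathcomp Require Import reals.
Set Implicit Arguments. Unset Strict Implicit. Unset Printing Implicit Defensive.
Import Order.TTheory GRing.Theory Num.Theory.
Local Open Scope ring_scope.

Section S.
Variables (R : realType) (m : nat) (s : R).
Hypothesis s0 : 0 <= s.
Definition a k : R := ('C(m, k))%:R * s ^+ k.
Definition f n : R := a n./2 * a (uphalf n).

Lemma a_ge0 k : 0 <= a k.
Proof. by rewrite /a mulr_ge0 // exprn_ge0. Qed.

Lemma logcR i j : (i < j)%N -> a i * a j.+1 <= a i.+1 * a j.
Proof.
move=> hij; rewrite /a.
have -> : 'C(m, i)%:R * s ^+ i * ('C(m, j.+1)%:R * s ^+ j.+1) = ('C(m, i) * 'C(m, j.+1))%:R * s ^+ (i + j.+1).
  by rewrite natrM exprD; ring.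
have -> : 'C(m, i.+1)%:R * s ^+ i.+1 * ('C(m, j)%:R * s ^+ j) = ('C(m, i.+1) * 'C(m, j))%:R * s ^+ (i + j.+1).
  by rewrite natrM addnS -addSn exprD; ring.
by rewrite ler_wpM2r ?exprn_ge0 // ler_nat (logc m hij).
Qed.

Lemma half_odd k : ((k.*2).+1)./2 = k.
Proof. by elim: k => //= k; rewrite uphalf_double. Qed.
Lemma uphalf_odd k : uphalf (k.*2).+1 = k.+1.
Proof. by rewrite /= doubleK. Qed.

Lemma pair d : forall i, a i * a (i + d) <= f (i + (i + d)).
Proof.
suff H : forall i, a i * a (i + d) <= f (i + (i + d)) /\ a i * a (i + d.+1) <= f (i + (i + d.+1)) by move=> i; case: (H i).
elim: d => [|d IH] i.
  rewrite !addn0 addn1 addnn /f uphalf_double doubleK; split => //.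
  by rewrite addnS addnn half_odd uphalf_odd.
split; first by case: (IH i).
rewrite [(i + d.+2)%N]addnS.
apply: le_trans (logcR (_ : (i < i + d.+1)%N)) _; first lia.
case: (IH i.+1) => H1 _.
move: H1; rewrite !addSn !addnS.
have -> : (i + (i + d)).+1 = (i + (i + d.+1))%N by lia.
by [].
Qed.

Lemma sum_shift (F : nat -> R) i K :
  \sum_(0 <= j < K) F (i + j)%N + \sum_(0 <= n < i) F n = \sum_(0 <= n < i + K) F n.
Proof.
elim: K => [|K IH]; first by rewrite big_geq // add0r addn0.
by rewrite big_nat_recr //= addrAC IH addnS big_nat_recr.
Qed.

Lemma sum_mono (F : nat -> R) M N : (M <= N)%N -> (forall n, 0 <= F n) ->
  \sum_(0 <= n < M) F n <= \sum_(0 <= n < N) F n.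
Proof.
move=> hMN hF; rewrite [X in _ <= X](big_cat_nat _ (n:=M)) //= lerDl.
by apply: sumr_ge0 => n _.
Qed.

Lemma sum_evenodd (F : nat -> R) K :
  \sum_(0 <= n < K.*2) F n = \sum_(0 <= k < K) (F k.*2 + F (k.*2).+1).
Proof.
elim: K => [|K IH]; first by rewrite !big_geq.
by rewrite doubleS !big_nat_recr //= IH addrA.
Qed.

Lemma sq_sum (F : nat -> R) n : (forall k, 0 <= F k) ->
  \sum_(0 <= k < n) F k ^+ 2 <= (\sum_(0 <= k < n) F k) ^+ 2.
Proof.
move=> hF; elim: n => [|n IH]; first by rewrite !big_geq // expr0n.
rewrite !big_nat_recr //=.
have h1 : 0 <= \sum_(0 <= k < n) F k by apply: sumr_ge0.
have h2 := hF n.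
nra.
Qed.

Lemma f_ge0 n : 0 <= f n.
Proof. by rewrite /f mulr_ge0 ?a_ge0. Qed.

Lemma pair2 i j : a i * a j <= f (i + j).
Proof.
have [hij|hij] := leqP i j.
  by have := pair (j - i) i; rewrite subnKC.
by have := pair (i - j) j; rewrite subnKC 1?ltnW // mulrC addnC.
Qed.

Lemma Abound : (\sum_(0 <= k < m.+1) a k) ^+ 2 <= (m.+1)%:R * \sum_(0 <= n < (m.+1).*2) f n.
Proof.
rewrite expr2 mulr_suml.
apply: (@le_trans _ _ (\sum_(0 <= i < m.+1) \sum_(0 <= n < (m.+1).*2) f n)); last first.
  by rewrite sumr_const_nat subn0 mulr_natl.
rewrite big_nat [X in _ <= X]big_nat; apply: ler_sum => i /andP[_ hi].
rewrite mulr_sumr.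
apply: (@le_trans _ _ (\sum_(0 <= j < m.+1) f (i + j))).
  by apply: ler_sum => j _; apply: pair2.
apply: (@le_trans _ _ (\sum_(0 <= n < i + m.+1) f n)).
  by rewrite -sum_shift lerDl; apply: sumr_ge0 => n _; apply: f_ge0.
by apply: sum_mono; [lia | apply: f_ge0].
Qed.

Lemma f_split : \sum_(0 <= n < (m.+1).*2) f n =
  \sum_(0 <= k < m.+1) a k ^+ 2 + \sum_(0 <= k < m) a k * a k.+1.
Proof.
rewrite sum_evenodd big_split /=; congr (_ + _).
  by apply: eq_bigr => k _; rewrite /f uphalf_double doubleK expr2.
rewrite big_nat_recr //= {2}/f half_odd uphalf_odd {2}/a (@bin_small m m.+1) // mul0r mulr0 addr0.
by apply: eq_bigr => k _; rewrite /f half_odd uphalf_odd.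
Qed.

Lemma sq_bound : (1 <= m)%N ->
  s * \sum_(0 <= k < m.+1) a k ^+ 2 <= (1 + s ^+ 2) * \sum_(0 <= k < m) a k * a k.+1.
Proof.
move=> hm.
set Q := \sum_(0 <= k < m) a k * a k.+1.
have hQ : Q = a 0 * a 1 + \sum_(0 <= t < m) a t.+1 * a t.+2.
  rewrite /Q; case Em: m hm => [//|m'] _.
  rewrite big_nat_recl // [X in _ = _ + X]big_nat_recr //= [a m'.+2]/a Em (@bin_small m'.+1 m'.+2) //.
  by rewrite mul0r mulr0 addr0.
have hQ0 : 0 <= Q by apply: sumr_ge0 => k _; rewrite mulr_ge0 ?a_ge0.
have hQ' : \sum_(0 <= t < m) a t * a t.+1 <= Q by [].
rewrite big_nat_recl // mulrDr mulr_sumr.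
have h0 : s * a 0 ^+ 2 <= a 0 * a 1.
  rewrite /a bin0 bin1 !expr0 expr1 !mul1r expr1n mulr1 -{1}(mul1r s) ler_wpM2r //.
  by rewrite ler1n.
have ht : \sum_(0 <= t < m) s * a t.+1 ^+ 2 <=
          \sum_(0 <= t < m) (s ^+ 2 * (a t * a t.+1) + a t.+1 * a t.+2).
  rewrite big_nat [X in _ <= X]big_nat; apply: ler_sum => t /andP[_ ht].
  have hmid := mid (k := t.+1) hm ht; rewrite /= in hmid.
  rewrite /a !exprS.
  set p := s ^+ t.
  set C0 := ('C(m, t))%:R; set C1 := ('C(m, t.+1))%:R; set C2 := ('C(m, t.+2))%:R.
  have hp : 0 <= p by rewrite exprn_ge0.
  set K := s * s * s * p * p * C1.
  apply: (@le_trans _ _ (K * C1)).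
    by rewrite le_eqVlt; apply/orP; left; apply/eqP; rewrite /K; ring.
  apply: (@le_trans _ _ (K * (C0 + C2))); last first.
    by rewrite le_eqVlt; apply/orP; left; apply/eqP; rewrite /K; ring.
  rewrite ler_wpM2l //; first by rewrite !mulr_ge0 // ler0n.
  by rewrite /C0 /C2 /C1 -natrD ler_nat.
rewrite big_split /= -[\sum_(0 <= i < m) s ^+ 2 * _]mulr_sumr in ht.
suff : s * a 0 ^+ 2 + \sum_(0 <= t < m) s * a t.+1 ^+ 2 <= Q + s ^+ 2 * Q.
  by rewrite mulrDl mul1r.
apply: (le_trans (lerD h0 ht)).
rewrite addrCA -hQ addrC lerD2l ler_wpM2l //.
by rewrite exprn_ge0.
Qed.
End S.

Theorem lemma1 (R : realType) (m : nat) (x : R) (hm : (1 <= m)%N) (hx : 0 < x) :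
  x / (2 * (m%:R) ^+ 2 * (1 + Num.sqrt x) ^+ 3) * (1 + Num.sqrt x) ^+ (2 * m)
    <= beta m x
  /\ beta m x <= (1 + Num.sqrt x) ^+ (2 * m).
Proof.
set s := Num.sqrt x.
have s0 : 0 < s by rewrite sqrtr_gt0.
have s0' : 0 <= s by apply: ltW.
have hxs : x = s ^+ 2 by rewrite sqr_sqrtr // ltW.
have hA : (1 + s) ^+ m = \sum_(0 <= k < m.+1) a m s k.
  rewrite addrC exprD1n big_mkord; apply: eq_bigr => i _.
  by rewrite /a mulr_natl.
have hA2 : (1 + s) ^+ (2 * m) = (\sum_(0 <= k < m.+1) a m s k) ^+ 2.
  by rewrite mulnC exprM hA.
set A := \sum_(0 <= k < m.+1) a m s k in hA hA2.
have hm0 : (m%:R : R) != 0 by rewrite pnatr_eq0 -lt0n.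
have hmpos : (0 : R) < m%:R by rewrite ltr0n.
split; last first.
  rewrite hA2; apply: le_trans (sq_sum _ (a_ge0 m s0')).
  rewrite big_ltn // -[beta m x]add0r; apply: lerD; first by rewrite exprn_ge0 // a_ge0.
  rewrite /beta [X in X <= _]big_nat [X in _ <= X]big_nat; apply: ler_sum => l /andP[hl1 hl2].
  rewrite /a exprMn -exprM mulnC exprM -hxs ler_wpM2r ?exprn_ge0 ?(ltW hx) //.
  rewrite /narayana -mulrA ler_pdivrMl // -natrM -natrX -natrM ler_nat expnS expn1 mulnA.
  by rewrite leq_mul2r nar ?orbT // hl1 -ltnS.
set Q := \sum_(0 <= k < m) a m s k * a m s k.+1.
have hQ0 : 0 <= Q by apply: sumr_ge0 => k _; rewrite mulr_ge0 ?a_ge0.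
have hbeta : m%:R * beta m x = s * Q.
  rewrite /beta big_add1 /= mulr_sumr /Q mulr_sumr; apply: eq_bigr => k _.
  rewrite /narayana /a /= hxs !mulrA mulfV // mul1r -exprM.
  have -> : (2 * k.+1 = k + k.+1 + 1)%N by lia.
  rewrite !exprD expr1; ring.
have hAb := Abound m s0'.
rewrite (f_split m s) in hAb.
have hsq := sq_bound s0' hm.
set S2 := \sum_(0 <= k < m.+1) a m s k ^+ 2 in hAb hsq.
have h1 : s * A ^+ 2 <= (m.+1)%:R * ((1 + s + s ^+ 2) * Q).
  apply: (le_trans (ler_wpM2l s0' hAb)).
  rewrite mulrCA ler_wpM2l ?ler0n // mulrDr.
  apply: (@le_trans _ _ ((1 + s ^+ 2) * Q + s * Q)); first by apply: lerD.
  by rewrite le_eqVlt; apply/orP; left; apply/eqP; ring.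
have h2 : (m.+1)%:R * ((1 + s + s ^+ 2) * Q) <= (2 * m%:R) * ((1 + s) ^+ 3 * Q).
  apply: ler_pM; rewrite ?ler0n ?mulr_ge0 ?addr_ge0 ?exprn_ge0 //.
    have hh : (m.+1 <= 2 * m)%N by lia.
    by move: hh; rewrite -(ler_nat R) natrM.
  apply: ler_wpM2r => //; nra.
rewrite hA2 -(ler_pM2l hmpos) hbeta hxs.
rewrite -subr_ge0.
have -> : s * Q - m%:R * (s ^+ 2 / (2 * m%:R ^+ 2 * (1 + s) ^+ 3) * A ^+ 2)
   = s / (2 * m%:R * (1 + s) ^+ 3) * ((2 * m%:R) * ((1 + s) ^+ 3 * Q) - s * A ^+ 2).
  by field; rewrite hm0 andbT gt_eqF // ltr_pwDl.
apply: mulr_ge0; last by rewrite subr_ge0 (le_trans h1 h2).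
by rewrite divr_ge0 // ?mulr_ge0 // ?exprn_ge0 ?ler0n // ?addr_ge0.
Qed.
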